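(* Euler's constant $\gamma:=\lim_{n\to\infty}\left(1+\frac12+\cdots+\frac1n-\ln n\right)$ satisfies \[ \gamma=\int_0^\infty\sum_{k=2}^\infty\frac{1}{k^2\binom{t+k}{k}}\,dt . \]
   Context: The generalized binomial coefficient is $\binom{s}{t}:=\frac{\Gamma(s+1)}{\Gamma(t+1)\Gamma(s-t+1)}$. *)

(* Defs.v *)
From Stdlib Require Import Reals Arith.
Open Scope R_scope.

Fixpoint falling (s : R) (k : nat) : R :=
  match k with
  | O => 1
  | S k' => falling s k' * (s - INR k')
  end.

(* generalized binomial coefficient binom(s, k) for natural k:
   Gamma(s+1)/(Gamma(k+1) Gamma(s-k+1)) = s(s-1)...(s-k+1)/k! *)
Definition gbinom (s : R) (k : nat) : R := falling s k / INR (Factorial.fact k).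

(* n-th partial Euler sequence, indexed so that index n gives
   1 + 1/2 + ... + 1/(n+1) - ln (n+1) *)
Definition euler_seq (n : nat) : R :=
  sum_f_R0 (fun i => / INR (i + 1)) n - ln (INR (n + 1)).

Definition gterm (t : R) (k : nat) : R :=
  / (INR k ^ 2 * gbinom (t + INR k) k).

Definition improper_integral_0_inf (f : R -> R) (l : R) : Prop :=
  exists pr : forall b : R, Riemann_integrable f 0 b,
    forall eps : R, eps > 0 -> exists M : R, forall b : R, b >= M ->
      Rabs (RiemannInt (pr b) - l) < eps.

(* Main.v *)
Require Import Defs.
From Stdlib Require Import Reals Lra Lia FunctionalExtensionality.
Open Scope R_scope.

Lemma falling_shift1 : forall k s, falling (s+1) (S k) = (s+1) * falling s k.
Proof.
  induction k as [|k IH]; intros s.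
  - simpl. ring.
  - change (falling (s+1) (S (S k))) with (falling (s+1) (S k) * (s + 1 - INR (S k))).
    rewrite IH. change (falling s (S k)) with (falling s k * (s - INR k)).
    rewrite S_INR. ring.
Qed.

Definition pp (t : R) (k : nat) : R := falling (t + INR k) k.

Lemma pp_S : forall t k, pp t (S k) = pp t k * (t + INR k + 1).
Proof.
  intros t k. unfold pp. rewrite S_INR.
  replace (t + (INR k + 1)) with ((t + INR k) + 1) by ring.
  rewrite falling_shift1. ring.
Qed.

Lemma pp_shift : forall t k, pp (t+1) k * (t+1) = pp t k * (t + INR k + 1).
Proof.
  intros t k. unfold pp.
  pose proof (falling_shift1 k (t + INR k)) as H.
  change (falling (t + INR k + 1) (S k)) with (falling (t + INR k + 1) k * (t + INR k + 1 - INR k)) in H.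
  replace (t + 1 + INR k) with (t + INR k + 1) by ring.
  replace (t + INR k + 1 - INR k) with (t+1) in H by ring.
  rewrite H. ring.
Qed.

Lemma pp_pos : forall t k, 0 <= t -> 0 < pp t k.
Proof.
  intros t k Ht. induction k as [|k IH].
  - unfold pp; simpl; lra.
  - rewrite pp_S. pose proof (pos_INR k). apply Rmult_lt_0_compat; lra.
Qed.

Lemma pp_ge : forall t k, 0 <= t -> (1 <= k)%nat -> (t+1) * INR (Factorial.fact k) <= pp t k.
Proof.
  intros t k Ht Hk. induction k as [|k IH].
  - lia.
  - destruct k as [|k].
    + unfold pp; simpl; lra.
    + rewrite pp_S. change (Factorial.fact (S (S k))) with (S (S k) * Factorial.fact (S k))%nat; rewrite mult_INR.
      assert (H1 : (t + 1) * INR (Factorial.fact (S k)) <= pp t (S k)) by (apply IH; lia).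
      pose proof (pos_INR (S k)). pose proof (pos_INR (Factorial.fact (S k))).
      rewrite S_INR with (n := S k).
      replace ((t + 1) * ((INR (S k) + 1) * INR (Factorial.fact (S k)))) with
        (((t + 1) * INR (Factorial.fact (S k))) * (INR (S k) + 1)) by ring.
      apply Rmult_le_compat; try lra.
      apply Rmult_le_pos; lra.
Qed.

Lemma gterm_pp : forall t k, 0 <= t -> gterm t k = INR (Factorial.fact k) / (INR k ^ 2 * pp t k).
Proof.
  intros t k Ht. unfold gterm, gbinom, pp.
  pose proof (pp_pos t k Ht) as H. unfold pp in H.
  pose proof (INR_fact_lt_0 k).
  destruct k as [|k].
  - simpl. replace (0 * 0) with 0 by ring. rewrite !Rmult_0_l. unfold Rdiv. rewrite Rinv_0. ring.
  - assert (INR (S k) <> 0) by (apply not_0_INR; lia).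
    field. repeat split; lra.
Qed.
Open Scope R_scope.

Definition bb (t : R) (k : nat) : R := INR (Factorial.fact k) / (pp t k * INR k * (t+1)).

Lemma term_tele : forall t k, 0 <= t -> (1 <= k)%nat ->
  gterm t k - gterm (t+1) k = bb t k - bb t (S k).
Proof.
  intros t k Ht Hk.
  rewrite (gterm_pp t k Ht), (gterm_pp (t+1) k ltac:(lra)).
  unfold bb.
  pose proof (pp_shift t k) as Hs.
  pose proof (pp_pos t k Ht) as HP.
  pose proof (pos_INR k) as Hk0.
  assert (Hx : INR k <> 0) by (apply not_0_INR; lia).
  assert (Hp' : pp (t+1) k = pp t k * (t + INR k + 1) / (t+1)) by (rewrite <- Hs; field; lra).
  rewrite Hp', pp_S.
  change (Factorial.fact (S k)) with (S k * Factorial.fact k)%nat.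
  rewrite mult_INR, S_INR.
  field. repeat split; lra.
Qed.

Lemma tele_sum : forall t K, 0 <= t ->
  sum_f_R0 (fun n => gterm t (n+2) - gterm (t+1) (n+2)) K = bb t 2 - bb t (K+3).
Proof.
  intros t K Ht. induction K as [|K IH].
  - simpl sum_f_R0. rewrite term_tele by (auto; lia). reflexivity.
  - rewrite tech5, IH. replace (S K + 2)%nat with (S (K + 2))%nat by lia. rewrite term_tele by (auto; lia).
    replace (S (K + 2))%nat with (K+3)%nat by lia.
    replace (S K + 3)%nat with (S (K+3))%nat by lia. ring.
Qed.

Lemma bb2 : forall t, 0 <= t -> bb t 2 = / ((t+1)^2 * (t+2)).
Proof.
  intros t Ht. unfold bb, pp. change (Factorial.fact 2) with 2%nat. replace (INR 2) with 2 by (simpl; ring). simpl falling. field. lra.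
Qed.

Lemma bb_bound : forall t k, 0 <= t -> (1 <= k)%nat -> 0 <= bb t k <= / INR k.
Proof.
  intros t k Ht Hk. unfold bb.
  pose proof (pp_ge t k Ht Hk). pose proof (pp_pos t k Ht).
  pose proof (INR_fact_lt_0 k).
  assert (Hx : 0 < INR k) by (apply lt_0_INR; lia).
  split.
  - apply Rle_mult_inv_pos; [lra|]. apply Rmult_lt_0_compat; [apply Rmult_lt_0_compat|]; lra.
  - rewrite <- (Rmult_1_l (/ INR k)). unfold Rdiv.
    rewrite !Rinv_mult.
    replace (INR (Factorial.fact k) * (/ pp t k * / INR k * / (t + 1))) with
       ((INR (Factorial.fact k) * / pp t k * / (t+1)) * / INR k) by ring.
    apply Rmult_le_compat_r. left; apply Rinv_0_lt_compat; lra.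
    apply (Rmult_le_reg_r (pp t k * (t+1))). apply Rmult_lt_0_compat; lra.
    replace (INR (Factorial.fact k) * / pp t k * / (t + 1) * (pp t k * (t + 1))) with (INR (Factorial.fact k)) by (field; lra).
    nra.
Qed.

Lemma gterm_bound : forall t n, 0 <= t ->
  0 <= gterm t (n+2) <= / (t+1) * (/ INR (n+1) - / INR (n+2)).
Proof.
  intros t n Ht. rewrite gterm_pp by auto.
  pose proof (pp_ge t (n+2) Ht ltac:(lia)). pose proof (pp_pos t (n+2) Ht).
  pose proof (INR_fact_lt_0 (n+2)).
  rewrite !plus_INR. simpl INR. pose proof (pos_INR n).
  split.
  - apply Rle_mult_inv_pos; [lra|]. apply Rmult_lt_0_compat; [|lra]. nra.
  - set (F := INR (Factorial.fact (n+2))) in *. set (P := pp t (n+2)) in *.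
    replace (/ (t + 1) * (/ (INR n + 1) - / (INR n + (1 + 1)))) with
      (/ ((t+1) * (INR n + 1) * (INR n + 2))) by (field; lra).
    apply (Rmult_le_reg_r ((INR n + (1 + 1)) ^ 2 * P)). nra.
    unfold Rdiv. rewrite Rmult_assoc, Rinv_l, Rmult_1_r by nra.
    apply (Rmult_le_reg_r ((t+1) * (INR n + 1) * (INR n + 2))). nra.
    replace (/ ((t + 1) * (INR n + 1) * (INR n + 2)) * ((INR n + (1 + 1)) ^ 2 * P) *
      ((t + 1) * (INR n + 1) * (INR n + 2))) with ((INR n + 2)^2 * P) by (field; nra).
    assert (F * (t+1) <= P) by lra.
    nra.
Qed.

Lemma cv_le : forall U l c K, Un_cv U l -> (forall n, (K <= n)%nat -> U n <= c) -> l <= c.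
Proof.
  intros U l c K Hcv HU. destruct (Rle_dec l c) as [h|h]; auto.
  exfalso. destruct (Hcv (l - c)) as [N HN]; [lra|].
  specialize (HN (max N K) ltac:(lia)). specialize (HU (max N K) ltac:(lia)).
  unfold Rdist in HN. apply Rabs_def2 in HN. lra.
Qed.

Lemma cv_ge : forall U l c K, Un_cv U l -> (forall n, (K <= n)%nat -> c <= U n) -> c <= l.
Proof.
  intros U l c K Hcv HU. destruct (Rle_dec c l) as [h|h]; auto.
  exfalso. destruct (Hcv (c - l)) as [N HN]; [lra|].
  specialize (HN (max N K) ltac:(lia)). specialize (HU (max N K) ltac:(lia)).
  unfold Rdist in HN. apply Rabs_def2 in HN. lra.
Qed.

Lemma inv_pos_nat : forall n, 0 < / INR (n+1).
Proof. intros n. apply Rinv_0_lt_compat. rewrite plus_INR. simpl. pose proof (pos_INR n). lra. Qed.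

Lemma inv_nat_cv : forall j, Un_cv (fun n => / INR (n + j + 1)) 0.
Proof.
  intros j eps Heps.
  destruct (INR_unbounded (/ eps)) as [N HN].
  exists N. intros n Hn. unfold Rdist. rewrite Rminus_0_r.
  assert (H0 : 0 < INR (n + j + 1)) by (apply lt_0_INR; lia).
  rewrite Rabs_pos_eq by (left; apply Rinv_0_lt_compat; auto).
  assert (INR N <= INR (n+j+1)) by (apply le_INR; lia).
  assert (0 < / eps) by (apply Rinv_0_lt_compat; auto).
  replace eps with (/ / eps) by (field; lra).
  apply Rinv_lt_contravar; nra.
Qed.

Lemma sum_tail : forall (u : nat -> R) c, 
  (forall n, 0 <= u n <= c * (/ INR (n+1) - / INR (n+2))) ->
  forall K m, 0 <= sum_f_R0 u (K+m) - sum_f_R0 u K <= c * (/ INR (K+2) - / INR (K+m+2)).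
Proof.
  intros u c Hu K m. induction m as [|m IH].
  - rewrite Nat.add_0_r. lra.
  - replace (K + S m)%nat with (S (K+m)) by lia. rewrite tech5.
    destruct (Hu (S (K+m))) as [h1 h2].
    replace (S (K+m) + 1)%nat with (K+m+2)%nat in h2 by lia.
    replace (S (K+m) + 2)%nat with (S (K+m)+2)%nat in h2 by lia.
    split; [lra|].
    replace (S (K + m) + 2)%nat with (K + m + 3)%nat in h2 by lia.
    replace (K + m + 2)%nat with (K + m + 2)%nat in h2 by lia.
    replace (S (K + m) + 2)%nat with (K + m + 3)%nat by lia. lra.
Qed.

Lemma sum_bound : forall (u : nat -> R) c, 
  (forall n, 0 <= u n <= c * (/ INR (n+1) - / INR (n+2))) ->
  forall N, 0 <= sum_f_R0 u N <= c * (1 - / INR (N+2)).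
Proof.
  intros u c Hu N. pose proof (sum_tail u c Hu 0 N) as H. simpl in H.
  destruct (Hu 0%nat) as [h1 h2]. simpl in h2.
  replace (N + 2)%nat with (N+2)%nat in H by lia.
  simpl in h2. replace (1+1) with 2 in h2 by ring.
  replace (/ (1 + 1)) with (/2) in H by (f_equal; ring).
  replace (1 - / INR (N + 2)) with ((1 - /2) + (/2 - / INR (N+2))) by ring.
  split; [lra|]. rewrite Rmult_plus_distr_l. replace (/ 1) with 1 in h2 by field. lra.
Qed.

Definition SP (t : R) (N : nat) : R := sum_f_R0 (fun n => gterm (Rabs t) (n+2)) N.

Lemma term_bnd : forall t n,
  0 <= gterm (Rabs t) (n+2) <= / (Rabs t + 1) * (/ INR (n+1) - / INR (n+2)).
Proof. intros. apply gterm_bound. apply Rabs_pos. Qed.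

Lemma term_bnd1 : forall t n,
  0 <= gterm (Rabs t) (n+2) <= 1 * (/ INR (n+1) - / INR (n+2)).
Proof.
  intros t n. destruct (term_bnd t n) as [h1 h2]. split; auto.
  pose proof (Rabs_pos t).
  assert (0 <= / INR (n+1) - / INR (n+2)).
  { assert (/ INR (n+2) <= / INR (n+1)); [|lra]. apply Rinv_le_contravar. apply lt_0_INR; lia. apply le_INR; lia. }
  assert (/ (Rabs t + 1) <= 1).
  { rewrite <- Rinv_1. apply Rinv_le_contravar; lra. }
  nra.
Qed.

Lemma SP_grow : forall t, Un_growing (SP t).
Proof.
  intros t n. unfold SP. rewrite tech5. destruct (term_bnd t (S n)). lra.
Qed.

Lemma SP_ub : forall t, has_ub (SP t).
Proof.
  intros t. exists 1. intros x [i ->]. unfold SP.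
  destruct (sum_bound _ 1 (term_bnd1 t) i) as [_ h].
  assert (0 < / INR (i+2)) by (apply Rinv_0_lt_compat, lt_0_INR; lia). lra.
Qed.

Definition fF (t : R) : R := proj1_sig (growing_cv (SP t) (SP_grow t) (SP_ub t)).

Lemma fF_cv : forall t, Un_cv (SP t) (fF t).
Proof. intros t. unfold fF. destruct (growing_cv (SP t) (SP_grow t) (SP_ub t)). simpl. auto. Qed.

Lemma fF_nonneg : forall t, 0 <= fF t.
Proof.
  intros t. apply (cv_ge (SP t) _ _ 0 (fF_cv t)). intros n _.
  unfold SP. destruct (sum_bound _ 1 (term_bnd1 t) n). auto.
Qed.

Lemma fF_le : forall t, fF t <= / (Rabs t + 1).
Proof.
  intros t. apply (cv_le (SP t) _ _ 0 (fF_cv t)). intros n _.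
  unfold SP. destruct (sum_bound _ _ (term_bnd t) n) as [_ h].
  assert (0 < / INR (n+2)) by (apply Rinv_0_lt_compat, lt_0_INR; lia).
  assert (0 < / (Rabs t + 1)) by (apply Rinv_0_lt_compat; pose proof (Rabs_pos t); lra).
  nra.
Qed.

Lemma fF_approx : forall t K, 0 <= fF t - SP t K <= / INR (K+2).
Proof.
  intros t K. split.
  - assert (SP t K <= fF t); [|lra].
    apply (cv_ge (SP t) _ _ K (fF_cv t)). intros n Hn.
    replace n with (K + (n-K))%nat by lia. unfold SP.
    destruct (sum_tail _ 1 (term_bnd1 t) K (n-K)). lra.
  - assert (fF t <= SP t K + / INR (K+2)); [|lra].
    apply (cv_le (SP t) _ _ K (fF_cv t)). intros n Hn.
    replace n with (K + (n-K))%nat by lia. unfold SP.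
    destruct (sum_tail _ 1 (term_bnd1 t) K (n-K)).
    assert (0 < / INR (K + (n-K) + 2)) by (apply Rinv_0_lt_compat, lt_0_INR; lia). lra.
Qed.

Lemma fF_shift : forall t, 0 <= t -> fF t - fF (t+1) = / ((t+1)^2 * (t+2)).
Proof.
  intros t Ht.
  pose proof (CV_minus _ _ _ _ (fF_cv t) (fF_cv (t+1))) as H1.
  assert (H2 : Un_cv (fun i => SP t i - SP (t+1) i) (/ ((t+1)^2 * (t+2)))).
  { intros eps Heps. destruct (inv_nat_cv 2 eps Heps) as [N HN].
    exists N. intros n Hn. specialize (HN n Hn).
    unfold SP. rewrite <- minus_sum.
    rewrite Rabs_pos_eq with (x := t) by auto.
    rewrite Rabs_pos_eq with (x := t+1) by lra.
    rewrite tele_sum by auto. rewrite bb2 by auto.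
    destruct (bb_bound t (n+3) Ht ltac:(lia)).
    unfold Rdist in *. rewrite Rminus_0_r in HN.
    replace (n+2+1)%nat with (n+3)%nat in HN by lia.
    rewrite Rabs_pos_eq in HN by lra.
    rewrite Rabs_left1 by lra. lra. }
  symmetry. eapply UL_sequence; eauto.
Qed.

Lemma falling_cont : forall k c x, continuity_pt (fun s => falling (s + c) k) x.
Proof.
  induction k as [|k IH]; intros c x.
  - simpl. apply continuity_pt_const. intros a b; reflexivity.
  - change (continuity_pt (mult_fct (fun s => falling (s+c) k) (fun s => s + c - INR k)) x).
    apply continuity_pt_mult; auto. reg.
Qed.

Lemma term_cont : forall n x, continuity_pt (fun t => gterm (Rabs t) (n+2)) x.
Proof.
  intros n x.
  assert (E : (fun t => gterm (Rabs t) (n+2)) =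
     (inv_fct (comp (fun s => INR (n+2) ^ 2 * (falling (s + INR (n+2)) (n+2) / INR (Factorial.fact (n+2)))) Rabs))).
  { apply functional_extensionality. intros t. reflexivity. }
  rewrite E. apply continuity_pt_inv.
  - apply continuity_pt_comp. apply Rcontinuity_abs.
    change (continuity_pt (mult_fct (fct_cte (INR (n+2) ^ 2)) (mult_fct (fun s => falling (s + INR (n+2)) (n+2)) (fct_cte (/ INR (Factorial.fact (n+2)))))) (Rabs x)).
    apply continuity_pt_mult. apply continuity_pt_const; intros a b; reflexivity.
    apply continuity_pt_mult. apply falling_cont. apply continuity_pt_const; intros a b; reflexivity.
  - unfold comp. pose proof (pp_pos (Rabs x) (n+2) (Rabs_pos x)) as H. unfold pp in H.
    pose proof (INR_fact_lt_0 (n+2)).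
    assert (0 < INR (n+2)) by (apply lt_0_INR; lia).
    apply Rgt_not_eq. apply Rmult_lt_0_compat. apply pow_lt; auto.
    apply Rdiv_lt_0_compat; auto.
Qed.

Lemma SP_cont : forall K x, continuity_pt (fun t => SP t K) x.
Proof.
  induction K as [|K IH]; intros x.
  - unfold SP. simpl. apply (term_cont 0 x).
  - unfold SP. change (continuity_pt (plus_fct (fun t => SP t K) (fun t => gterm (Rabs t) (S K + 2))) x).
    apply continuity_pt_plus; auto. apply term_cont.
Qed.

Lemma fF_cont : forall x, continuity_pt fF x.
Proof.
  intros x eps Heps.
  destruct (inv_nat_cv 1 (eps/3) ltac:(lra)) as [K HK].
  specialize (HK K (le_n K)). unfold Rdist in HK. rewrite Rminus_0_r in HK.
  replace (K + 1 + 1)%nat with (K+2)%nat in HK by lia.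
  rewrite Rabs_pos_eq in HK by (left; apply Rinv_0_lt_compat, lt_0_INR; lia).
  destruct (SP_cont K x (eps/3) ltac:(lra)) as [del [Hdel Hc]].
  exists del. split; auto. intros y [Hd Hy].
  specialize (Hc y (conj Hd Hy)). simpl in *. unfold R_dist in *.
  pose proof (fF_approx x K). pose proof (fF_approx y K).
  apply Rabs_def2 in Hc. apply Rabs_def1; lra.
Qed.

Lemma pr_f : forall b, Riemann_integrable fF 0 b.
Proof.
  intros b. destruct (Rle_dec 0 b) as [h|h].
  - apply continuity_implies_RiemannInt; auto. intros; apply fF_cont.
  - apply RiemannInt_P1. apply continuity_implies_RiemannInt; [lra|]. intros; apply fF_cont.
Qed.

Definition PP (x : R) : R := RiemannInt (pr_f x).

Lemma dlim_local : forall g h x l r C, 0 < r -> (forall y, Rabs (y - x) < r -> g y = h y + C) ->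
  derivable_pt_lim h x l -> derivable_pt_lim g x l.
Proof.
  intros g h x l r C Hr Heq Hd eps Heps.
  destruct (Hd eps Heps) as [del Hdel].
  assert (Hm : 0 < Rmin del r) by (apply Rmin_pos; [apply cond_pos|auto]).
  exists (mkposreal _ Hm). intros hh Hh0 Hh. simpl in Hh.
  rewrite (Heq (x+hh)), (Heq x).
  - replace ((h (x + hh) + C - (h x + C)) / hh - l) with ((h (x + hh) - h x) / hh - l) by (field; auto).
    apply Hdel; auto. apply Rlt_le_trans with (1 := Hh). apply Rmin_l.
  - rewrite Rminus_diag, Rabs_R0. auto.
  - replace (x + hh - x) with hh by ring. apply Rlt_le_trans with (1 := Hh). apply Rmin_r.
Qed.

Lemma PP_deriv : forall x, derivable_pt_lim PP x (fF x).
Proof.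
  intros x.
  assert (h : x - 1 <= x + 1) by lra.
  assert (C0 : forall y, x - 1 <= y <= x + 1 -> continuity_pt fF y) by (intros; apply fF_cont).
  pose proof (@RiemannInt_P27 fF (x-1) (x+1) x h C0 ltac:(lra)) as H27.
  apply (dlim_local PP (primitive h (FTC_P1 h C0)) x (fF x) 1 (PP (x-1)) Rlt_0_1); auto.
  intros y Hy. apply Rabs_def2 in Hy.
  unfold primitive. destruct (Rle_dec (x-1) y) as [r|r]; [|lra].
  destruct (Rle_dec y (x+1)) as [r0|r0]; [|lra].
  unfold PP. rewrite Rplus_comm. symmetry. apply RiemannInt_P26.
Qed.

Lemma dlin : forall c x, derivable_pt_lim (fun y => y + c) x 1.
Proof.
  intros c x eps Heps. exists (mkposreal 1 Rlt_0_1). intros h Hh _.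
  replace ((x + h + c - (x + c)) / h - 1) with 0 by (field; auto).
  rewrite Rabs_R0; auto.
Qed.

Lemma dln : forall c x, 0 < x + c -> derivable_pt_lim (fun y => ln (y + c)) x (/ (x + c)).
Proof.
  intros c x H.
  pose proof (derivable_pt_lim_comp (fun y => y + c) ln x 1 (/ (x+c)) (dlin c x) (derivable_pt_lim_ln _ H)) as H2.
  rewrite Rmult_1_r in H2. exact H2.
Qed.

Lemma dinv : forall x, 0 < x + 1 -> derivable_pt_lim (fun y => / (y + 1)) x (- / (x+1)^2).
Proof.
  intros x H.
  set (g := fun y => y + 1).
  assert (na : g x <> 0) by (unfold g; lra).
  pose (pr := exist (fun l => derivable_pt_abs g x l) 1 (dlin 1 x) : derivable_pt g x).
  pose proof (derive_pt_inv g x pr na) as E.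
  apply derive_pt_eq_1 in E. 
  replace (- / (x + 1) ^ 2) with (- derive_pt g x pr / Rsqr (g x)).
  - exact E.
  - simpl. unfold g, Rsqr. field. lra.
Qed.

Definition EE (y : R) : R := ln (y + 2) - ln (y + 1) - / (y + 1).

Lemma EE_deriv : forall x, -1 < x ->
  derivable_pt_lim EE x (/ (x+2) - / (x+1) - - / (x+1)^2).
Proof.
  intros x Hx.
  change (derivable_pt_lim (minus_fct (minus_fct (fun y => ln (y+2)) (fun y => ln (y+1))) (fun y => / (y+1))) x (/ (x+2) - / (x+1) - - / (x+1)^2)).
  apply derivable_pt_lim_minus; [apply derivable_pt_lim_minus|].
  - apply dln; lra.
  - apply dln; lra.
  - apply dinv; lra.
Qed.

Definition QQ (y : R) : R := PP (y + 1) - PP y + EE y.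

Lemma QQ_deriv : forall x, -1 < x ->
  derivable_pt_lim QQ x (fF (x+1) * 1 - fF x + (/ (x+2) - / (x+1) - - / (x+1)^2)).
Proof.
  intros x Hx.
  change (derivable_pt_lim (plus_fct (minus_fct (comp PP (fun y => y + 1)) PP) EE) x (fF (x+1) * 1 - fF x + (/ (x+2) - / (x+1) - - / (x+1)^2))).
  apply derivable_pt_lim_plus; [apply derivable_pt_lim_minus|].
  - apply derivable_pt_lim_comp. apply dlin. apply PP_deriv.
  - apply PP_deriv.
  - apply EE_deriv; auto.
Qed.

Lemma QQ_const : forall M, 0 <= M -> QQ M = QQ 0.
Proof.
  intros M HM.
  assert (pr : forall x, 0 < x < M -> derivable_pt QQ x).
  { intros x Hx. exists (fF (x+1) * 1 - fF x + (/ (x+2) - / (x+1) - - / (x+1)^2)).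
    apply QQ_deriv; lra. }
  refine (null_derivative_loc QQ 0 M pr _ _ M _).
  - intros x Hx. apply derivable_continuous_pt.
    exists (fF (x+1) * 1 - fF x + (/ (x+2) - / (x+1) - - / (x+1)^2)). apply QQ_deriv; lra.
  - intros x P. apply derive_pt_eq_0. 
    replace 0 with (fF (x+1) * 1 - fF x + (/ (x+2) - / (x+1) - - / (x+1)^2)).
    + apply QQ_deriv; lra.
    + pose proof (fF_shift x ltac:(lra)) as Hs.
      assert (E : / (x+2) - / (x+1) - - / (x+1)^2 = / ((x + 1) ^ 2 * (x + 2))) by (field; lra).
      rewrite E, <- Hs. ring.
  - lra.
Qed.

Lemma PP_diff : forall x y l u, 0 <= x <= y -> (forall t, x < t < y -> l <= fF t <= u) ->
  l * (y - x) <= PP y - PP x <= u * (y - x).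
Proof.
  intros x y l u Hxy Hb.
  assert (prxy : Riemann_integrable fF x y).
  { apply continuity_implies_RiemannInt; [lra|]. intros; apply fF_cont. }
  pose proof (RiemannInt_P26 (pr_f x) prxy (pr_f y)) as E.
  pose proof (RiemannInt_const_bound (l:=l) (u:=u) prxy ltac:(lra) Hb).
  unfold PP. lra.
Qed.

Lemma fF_le1 : forall t, fF t <= 1.
Proof.
  intros t. pose proof (fF_le t). pose proof (Rabs_pos t).
  assert (/ (Rabs t + 1) <= 1) by (rewrite <- Rinv_1; apply Rinv_le_contravar; lra). lra.
Qed.

Lemma PP_mono : forall x y, 0 <= x <= y -> PP x <= PP y.
Proof.
  intros x y H. destruct (PP_diff x y 0 1 H) as [h _].
  - intros t Ht. split; [apply fF_nonneg|apply fF_le1].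
  - lra.
Qed.

Lemma ln_step : forall N, 0 <= N -> 0 <= ln (N + 2) - ln (N + 1) <= / (N + 1).
Proof.
  intros N HN. split.
  - assert (ln (N+1) < ln (N+2)) by (apply ln_increasing; lra). lra.
  - replace (N + 2) with ((N + 1) * (1 + / (N+1))) by (field; lra).
    rewrite ln_mult by (try lra; assert (0 < / (N+1)) by (apply Rinv_0_lt_compat; lra); lra).
    assert (Hu : 0 < / (N+1)) by (apply Rinv_0_lt_compat; lra).
    pose proof (exp_ineq1 (/ (N+1)) ltac:(lra)) as He.
    assert (ln (1 + / (N + 1)) < ln (exp (/ (N+1)))) by (apply ln_increasing; lra).
    rewrite ln_exp in H. lra.
Qed.

Lemma QQ_bound : forall N, 0 <= N -> Rabs (QQ N) <= / (N + 1).
Proof.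
  intros N HN. unfold QQ, EE.
  destruct (PP_diff N (N+1) 0 (/ (N+1)) ltac:(lra)) as [h1 h2].
  - intros t Ht. split; [apply fF_nonneg|].
    pose proof (fF_le t). rewrite Rabs_pos_eq in H by lra.
    assert (/ (t+1) <= / (N+1)) by (apply Rinv_le_contravar; lra). lra.
  - pose proof (ln_step N HN).
    assert (0 < / (N+1)) by (apply Rinv_0_lt_compat; lra).
    replace (N + 1 - N) with 1 in * by ring.
    apply Rabs_le. lra.
Qed.

Lemma QQ0 : QQ 0 = 0.
Proof.
  destruct (Req_dec (QQ 0) 0) as [h|h]; auto. exfalso.
  assert (Hp : 0 < Rabs (QQ 0)) by (apply Rabs_pos_lt; auto).
  destruct (inv_nat_cv 0 _ Hp) as [N HN]. specialize (HN N (le_n N)).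
  unfold Rdist in HN. rewrite Rminus_0_r in HN.
  rewrite Rabs_pos_eq in HN by (left; apply Rinv_0_lt_compat, lt_0_INR; lia).
  pose proof (QQ_bound (INR N) (pos_INR N)) as Hb.
  rewrite QQ_const in Hb by apply pos_INR.
  rewrite Nat.add_0_r, plus_INR in HN. simpl in HN. lra.
Qed.

Lemma PP_nat : forall N, PP (INR N) = euler_seq N - / INR (N+1).
Proof.
  induction N as [|N IH].
  - unfold PP, euler_seq. simpl. rewrite RiemannInt_P9, ln_1. field.
  - assert (HQ : QQ (INR N) = 0) by (rewrite QQ_const by apply pos_INR; apply QQ0).
    unfold QQ, EE in HQ. rewrite S_INR.
    assert (E1 : PP (INR N + 1) = PP (INR N) - (ln (INR N + 2) - ln (INR N + 1) - / (INR N + 1))) by lra.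
    rewrite E1, IH. unfold euler_seq. rewrite tech5.
    replace (S N + 1)%nat with (S (N+1)) by lia. rewrite !S_INR, !plus_INR. simpl INR.
    replace (INR N + 1 + 1) with (INR N + 2) by ring. field.
    pose proof (pos_INR N). lra.
Qed.

Lemma cv_ext : forall U V l, (forall n, U n = V n) -> Un_cv U l -> Un_cv V l.
Proof. intros U V l E H eps He. destruct (H eps He) as [N HN]. exists N. intros n Hn. rewrite <- E. auto. Qed.

Theorem proposition2 (gamma : R) :
  Un_cv euler_seq gamma ->
  exists f : R -> R,
    (forall t : R, 0 <= t -> infinite_sum (fun n => gterm t (n + 2)) (f t)) /\
    improper_integral_0_inf f gamma.
Proof.
  intros Hg. exists fF. split.
  - intros t Ht. pose proof (fF_cv t) as H. unfold SP in H. rewrite (Rabs_pos_eq t Ht) in H.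
    exact H.
  - exists pr_f.
    assert (Hu : Un_cv (fun N => PP (INR N)) gamma).
    { pose proof (CV_minus _ _ _ _ Hg (inv_nat_cv 0)) as H. rewrite Rminus_0_r in H.
      refine (cv_ext _ _ _ _ H). intros n. cbv beta. rewrite PP_nat. replace (n+0+1)%nat with (n+1)%nat by lia. reflexivity. }
    assert (Hgr : Un_growing (fun N => PP (INR N))).
    { intros n. apply PP_mono. rewrite S_INR. pose proof (pos_INR n). lra. }
    pose proof (growing_ineq _ _ Hgr Hu) as Hle.
    intros eps Heps. destruct (Hu eps Heps) as [N0 HN0].
    exists (INR N0). intros b Hb.
    specialize (HN0 N0 (le_n N0)). unfold Rdist in HN0.
    pose proof (pos_INR N0).
    assert (L : PP (INR N0) <= PP b) by (apply PP_mono; lra).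
    destruct (INR_unbounded b) as [N HN].
    assert (U : PP b <= PP (INR N)) by (apply PP_mono; lra).
    specialize (Hle N). simpl in Hle.
    change (RiemannInt (pr_f b)) with (PP b).
    apply Rabs_def2 in HN0. apply Rabs_def1; lra.
Qed.
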